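(* There is an absolute constant $c>0$ such that for every $k\ge 1$, every parity decision tree that computes $\mathsf{MAJ}_3^{\otimes k}$ has depth at least $c\cdot 2.25^k$; i.e., the parity decision tree depth of $\mathsf{MAJ}_3^{\otimes k}$ is $\Omega(2.25^k)$.
   Context: $\mathsf{MAJ}_3:\{-1,1\}^3\to\{-1,1\}$ is $\mathsf{MAJ}_3(x)=(-1)^{\mathbf{1}[x_1+x_2+x_3<0]}$. For $k\ge2$, $\mathsf{MAJ}_3^{\otimes k}:\{-1,1\}^{3^k}\to\{-1,1\}$ is defined by $\mathsf{MAJ}_3^{\otimes k}(x)=\mathsf{MAJ}_3\big(\mathsf{MAJ}_3^{\otimes k-1}(x_1,\dots,x_{3^{k-1}}),\mathsf{MAJ}_3^{\otimes k-1}(x_{3^{k-1}+1},\dots,x_{2\cdot3^{k-1}}),\mathsf{MAJ}_3^{\otimes k-1}(x_{2\cdot 3^{k-1}+1},\dots,x_{3^k})\big)$, with $\mathsf{MAJ}_3^{\otimes 1}=\mathsf{MAJ}_3$. A parity decision tree is a rooted full binary tree whose internal nodes are labelled by subsets $S$ of the variable indices, whose two outgoing edges are labelled $-1$ and $1$, and whose leaves are labelled by values in $\{-1,1\}$; an input $x$ follows from a node labelled $S$ the edge labelled $\prod_{i\in S}x_i$. It computes $f$ if every input $x$ reaches a leaf labelled $f(x)$; its depth is the maximum number of internal nodes on a root-to-leaf path. *)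

(* Defs.v *)
From mathcomp Require Import all_boot all_order all_algebra.
Set Implicit Arguments. Unset Strict Implicit. Unset Printing Implicit Defensive.

(* Encoding of {-1,1}: a boolean b stands for (-1)^b, i.e. true = -1, false = 1.
   Multiplication of signs becomes xor (addb). *)

(* MAJ_3 : value -1 iff x1+x2+x3 < 0 iff at least two of the inputs are -1. *)
Definition maj3 (a b c : bool) : bool := [|| a && b, a && c | b && c].

(* Recursive majority on a nat-indexed input; majk k x only reads x 0 .. x (3^k - 1).
   majk 0 x = x 0, so majk 1 x = maj3 (x 0) (x 1) (x 2) = MAJ_3. *)
Fixpoint majk (k : nat) (x : nat -> bool) : bool :=
  match k with
  | 0 => x 0%N
  | k'.+1 => maj3 (majk k' x)
                  (majk k' (fun i => x (i + 3 ^ k')%N))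
                  (majk k' (fun i => x (i + 2 * 3 ^ k')%N))
  end.

(* Extension of an input on 'I_n to nat (out-of-range indices are never read). *)
Definition ext (n : nat) (x : {ffun 'I_n -> bool}) : nat -> bool :=
  fun j => match insub j with Some i => x i | None => false end.

Definition MAJ3k (k : nat) (x : {ffun 'I_(3 ^ k) -> bool}) : bool :=
  majk k (ext x).

Inductive pdt (n : nat) : Type :=
| PLeaf : bool -> pdt n
| PNode : {set 'I_n} -> pdt n -> pdt n -> pdt n.
(* PNode S tm tp : tm is the child along edge -1, tp along edge 1. *)

Definition parity (n : nat) (S : {set 'I_n}) (x : {ffun 'I_n -> bool}) : bool :=
  \big[addb/false]_(i in S) x i.

Fixpoint pdt_eval (n : nat) (t : pdt n) (x : {ffun 'I_n -> bool}) : bool :=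
  match t with
  | PLeaf b => b
  | PNode A tm tp => if parity A x then pdt_eval tm x else pdt_eval tp x
  end.

Fixpoint pdt_depth (n : nat) (t : pdt n) : nat :=
  match t with
  | PLeaf _ => 0
  | PNode _ tm tp => (maxn (pdt_depth tm) (pdt_depth tp)).+1
  end.

Definition pdt_computes (n : nat) (t : pdt n) (f : {ffun 'I_n -> bool} -> bool) : Prop :=
  forall x, pdt_eval t x = f x.

(* Main.v *)
Require Import Defs.
From mathcomp Require Import all_boot all_order all_algebra.
From mathcomp Require Import ring lra zify.
Import Order.TTheory GRing.Theory Num.Theory.
Local Open Scope ring_scope.
Open Scope nat_scope.

Definition sgn (b : bool) : rat := if b then (-1)%R else 1%R.
Definition px (T : seq nat) (y : nat -> bool) : bool := \big[addb/false]_(i <- T) y i.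
Definition chi (T : seq nat) (y : nat -> bool) : rat := sgn (px T y).
Definition rep := seq (seq nat * rat).
Definition ev (R : rep) (y : nat -> bool) : rat := (\sum_(e <- R) e.2 * chi e.1 y)%R.
Definition scale (c : rat) (R : rep) : rep := [seq (e.1, (c * e.2)%R) | e <- R].
Definition rmul (A B : rep) : rep := [seq (a.1 ++ b.1, (a.2 * b.2)%R) | a <- A, b <- B].
Definition mmul (s : seq nat) (R : rep) : rep := [seq (s ++ e.1, e.2) | e <- R].

Lemma sgn_addb a b : sgn (a (+) b) = (sgn a * sgn b)%R.
Proof. by case: a; case: b; rewrite /sgn /= ?mulN1r ?mulr1 ?mul1r ?opprK. Qed.

Lemma px_cat s1 s2 y : px (s1 ++ s2) y = px s1 y (+) px s2 y.
Proof. by rewrite /px big_cat. Qed.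

Lemma chi_cat s1 s2 y : chi (s1 ++ s2) y = (chi s1 y * chi s2 y)%R.
Proof. by rewrite /chi px_cat sgn_addb. Qed.

Lemma ev_cat A B y : ev (A ++ B) y = (ev A y + ev B y)%R.
Proof. by rewrite /ev big_cat. Qed.

Lemma ev_scale c A y : ev (scale c A) y = (c * ev A y)%R.
Proof. rewrite /ev big_map mulr_sumr; apply: eq_bigr => e _ /=; by rewrite mulrA. Qed.

Lemma ev_mmul s A y : ev (mmul s A) y = (chi s y * ev A y)%R.
Proof.
rewrite /ev big_map mulr_sumr; apply: eq_bigr => e _ /=.
by rewrite chi_cat mulrCA.
Qed.

Lemma ev_rmul A B y : ev (rmul A B) y = (ev A y * ev B y)%R.
Proof.
rewrite /ev /rmul big_allpairs_dep /= mulr_suml; apply: eq_bigr => a _.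
rewrite mulr_sumr; apply: eq_bigr => b _ /=.
rewrite chi_cat. rewrite mulrACA. done.
Qed.

Lemma iterop_addb n b : iterop n addb b false = odd n && b.
Proof.
case: n => [|n] //=; elim: n => [|n IH] //=.
rewrite IH; clear IH; by case: (odd n); case: b.
Qed.

Lemma px_undup V y :
  px V y = \big[addb/false]_(j <- undup V) (odd (count_mem j V) && y j).
Proof.
rewrite /px -big_undup_iterop_count; apply: eq_bigr => j _.
by rewrite iterop_addb.
Qed.

Section Cube.
Variable n : nat.
Implicit Types (x : {ffun 'I_n -> bool}).

Lemma ext_val x (i : 'I_n) : ext x (val i) = x i.
Proof. by rewrite /ext valK. Qed.

Lemma ext_ge x j : n <= j -> ext x j = false.
Proof. by move=> h; rewrite /ext insubF // ltnNge h. Qed.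

Definition flip (i : 'I_n) x : {ffun 'I_n -> bool} := [ffun j => (j == i) (+) x j].

Lemma flipK i : involutive (flip i).
Proof. move=> x; apply/ffunP => j; rewrite !ffunE; by case: (j == i); case: (x j). Qed.

Lemma ext_flip i x j : ext (flip i x) j = ext x j (+) (j == val i).
Proof.
rewrite /ext; case: insubP => [o _ <-|hj] /=.
  by rewrite ffunE addbC val_eqE.
have -> : (j == val i) = false.
  by apply/negbTE; apply: contra hj => /eqP ->; apply: ltn_ord.
done.
Qed.

Lemma px_flip V i x :
  px V (ext (flip i x)) = px V (ext x) (+) odd (count_mem (val i) V).
Proof.
elim: V => [|a V IH]; first by rewrite /px !big_nil.
rewrite /px !big_cons -/(px V _) IH ext_flip /= oddD.
rewrite -/(px V _); by case: (ext x a); case: (a == val i); case: (px V (ext x)); case: (odd (count_mem (val i) V)).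
Qed.

Lemma sumchi V :
  (\sum_(x : {ffun 'I_n -> bool}) chi V (ext x))%R =
  if [forall i : 'I_n, ~~ odd (count_mem (val i) V)] then ((2 ^ n)%:R)%R else 0%R.
Proof.
case: ifP => [/forallP h | /forallP h].
  transitivity (\sum_(x : {ffun 'I_n -> bool}) (1 : rat))%R.
    apply: eq_bigr => x _; rewrite /chi px_undup big1 //= => j _.
    case: (ltnP j n) => hj; last by rewrite ext_ge ?andbF.
    by move: (h (Ordinal hj)) => /= /negbTE ->.
  by rewrite sumr_const card_ffun card_bool card_ord.
have [i hi] : exists i : 'I_n, odd (count_mem (val i) V).
  apply/existsP; rewrite -[X in is_true X]negbK negb_exists; apply/negP => hh.
  by apply: h => i; move/forallP: hh; apply.
set S := (\sum_(x : {ffun 'I_n -> bool}) chi V (ext x))%R.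
have hS : S = (- S)%R.
  rewrite [LHS](reindex_inj (can_inj (flipK i))) /S -sumrN; apply: eq_bigr => x _.
  by rewrite /chi px_flip hi sgn_addb /sgn mulrN1.
have : (S *+ 2 = 0)%R by rewrite mulr2n {1}hS addNr.
by move/eqP; rewrite mulrn_eq0 /= => /eqP.
Qed.

Definition oddset (T : seq nat) : {set 'I_n} := [set i | odd (count_mem (val i) T)].
Definition coef (R : rep) (U : {set 'I_n}) : rat :=
  (\sum_(e <- R) e.2 * (oddset e.1 == U)%:R)%R.
Definition sU (U : {set 'I_n}) : seq nat := map val (enum U).
Definition supp (R : rep) := [set U | coef R U != 0%R].

Lemma count_sU U (i : 'I_n) : count_mem (val i) (sU U) = (i \in U).
Proof.
rewrite /sU count_map.
rewrite (eq_count (a2 := pred1 i)); last by move=> j /=; rewrite val_eqE.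
by rewrite count_uniq_mem ?enum_uniq // mem_enum.
Qed.

Lemma even_iff T U :
  [forall i : 'I_n, ~~ odd (count_mem (val i) (T ++ sU U))] = (oddset T == U).
Proof.
apply/forallP/eqP => [h | <-].
  apply/setP => i; move: (h i); rewrite count_cat count_sU inE oddD.
  by case: (odd _); case: (i \in U).
move=> i; rewrite count_cat count_sU inE oddD.
by case: (odd _).
Qed.

Lemma link R U :
  (\sum_(x : {ffun 'I_n -> bool}) ev R (ext x) * chi (sU U) (ext x))%R =
  ((2 ^ n)%:R * coef R U)%R.
Proof.
rewrite /ev /coef.
under eq_bigr do rewrite mulr_suml.
rewrite exchange_big /= mulr_sumr; apply: eq_bigr => e _.
under eq_bigr do rewrite -mulrA -chi_cat.
rewrite -mulr_sumr sumchi even_iff.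
by case: (oddset e.1 == U); rewrite /= ?mulr1 ?mulr0 ?mul0r // mulrC.
Qed.

Lemma coef_uniq R1 R2 :
  (forall x, ev R1 (ext x) = ev R2 (ext x)) -> forall U, coef R1 U = coef R2 U.
Proof.
move=> h U.
have : ((2 ^ n)%:R * coef R1 U = (2 ^ n)%:R * coef R2 U :> rat)%R.
  rewrite -!link; apply: eq_bigr => x _; by rewrite h.
move/(mulfI _); apply.
by rewrite pnatr_eq0 expn_eq0.
Qed.

Lemma supp_size R : #|supp R| <= size R.
Proof.
rewrite -(size_map (fun e => oddset e.1)).
apply: leq_trans (card_size _).
apply: subset_leq_card; apply/subsetP => U; rewrite !inE => hU.
apply/negPn/negP => hn; move/eqP: hU; apply.
rewrite /coef big1_seq // => e /andP [_ he].
case: eqP => [ho|]; last by rewrite mulr0.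
by case/negP: hn; apply/mapP; exists e.
Qed.
End Cube.
Arguments sU {n}.

Fixpoint trep {n} (t : pdt n) : rep :=
  match t with
  | PLeaf b => [:: ([::], sgn b)]
  | PNode A tm tp =>
      scale (1/2)%R (trep tm ++ trep tp ++ scale (-1)%R (mmul (sU A) (trep tm))
                     ++ mmul (sU A) (trep tp))
  end.

Lemma parity_px n (A : {set 'I_n}) x : parity A x = px (sU A) (ext x).
Proof.
rewrite /parity /px /sU big_map big_enum /=; apply: eq_bigr => i _.
by rewrite ext_val.
Qed.

Lemma two_neq0 : (2%:R : rat) != 0%R. Proof. by []. Qed.

Lemma ev_trep n (t : pdt n) x : ev (trep t) (ext x) = sgn (pdt_eval t x).
Proof.
elim: t => [b|A tm IHm tp IHp] /=.
  by rewrite /ev big_cons big_nil /chi /px big_nil /sgn /= mulr1 addr0.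
rewrite ev_scale !ev_cat ev_scale !ev_mmul IHm IHp parity_px /chi.
case: (px _ _); case: (pdt_eval tm x); case: (pdt_eval tp x); rewrite /sgn; field; exact: two_neq0.
Qed.

Lemma size_trep n (t : pdt n) : size (trep t) <= 4 ^ pdt_depth t.
Proof.
elim: t => [b|A tm IHm tp IHp] //=.
rewrite !size_map !size_cat !size_map expnS.
have hm : size (trep tm) <= 4 ^ maxn (pdt_depth tm) (pdt_depth tp).
  by apply: leq_trans IHm _; rewrite leq_exp2l // leq_maxl.
have hp : size (trep tp) <= 4 ^ maxn (pdt_depth tm) (pdt_depth tp).
  by apply: leq_trans IHp _; rewrite leq_exp2l // leq_maxr.
move: hm hp; set M := 4 ^ _; set a := size _; set b := size _; clear; lia.
Qed.

Fixpoint mrep (k m : nat) : rep :=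
  match k with
  | 0 => [:: ([:: m], 1%R)]
  | k'.+1 =>
      scale (1/2)%R (mrep k' m ++ mrep k' (m + 3 ^ k') ++ mrep k' (m + 2 * 3 ^ k') ++
        scale (-1)%R (rmul (rmul (mrep k' m) (mrep k' (m + 3 ^ k'))) (mrep k' (m + 2 * 3 ^ k'))))
  end.

Lemma majk_ext k x x' : (forall i, x i = x' i) -> majk k x = majk k x'.
Proof.
elim: k x x' => [|k IH] x x' h /=; first by apply: h.
by rewrite (IH _ x') // (IH (fun i => x (i + 3 ^ k)) (fun i => x' (i + 3 ^ k))) //
  (IH (fun i => x (i + 2 * 3 ^ k)) (fun i => x' (i + 2 * 3 ^ k))).
Qed.

Lemma sgn_maj3 a b c :
  sgn (maj3 a b c) = (1/2 * (sgn a + sgn b + sgn c - sgn a * sgn b * sgn c))%R.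
Proof. by case: a; case: b; case: c; rewrite /sgn /=; field; exact: two_neq0. Qed.

Lemma ev_mrep k m y : ev (mrep k m) y = sgn (majk k (fun i => y (i + m))).
Proof.
elim: k m => [|k IH] m /=.
  by rewrite /ev big_cons big_nil /chi /px big_cons big_nil addbF mul1r addr0.
rewrite ev_scale !ev_cat ev_scale !ev_rmul !IH sgn_maj3.
rewrite (majk_ext k (fun i => y (i + 3 ^ k + m)) (fun i => y (i + (m + 3 ^ k)))); last first.
  by move=> i; rewrite addnA addnAC.
rewrite (majk_ext k (fun i => y (i + 2 * 3 ^ k + m)) (fun i => y (i + (m + 2 * 3 ^ k)))); last first.
  by move=> i; rewrite addnA addnAC.
by ring.
Qed.

Definition inb (lo hi : nat) (R : rep) :=
  forall e, e \in R -> forall i, i \in e.1 -> lo <= i < hi.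

Lemma inb_cat lo hi A B : inb lo hi A -> inb lo hi B -> inb lo hi (A ++ B).
Proof. by move=> hA hB e; rewrite mem_cat => /orP [/hA|/hB]. Qed.

Lemma inb_scale lo hi c A : inb lo hi A -> inb lo hi (scale c A).
Proof. by move=> hA e /mapP [e' he' ->] /=; apply: hA. Qed.

Lemma inb_rmul lo hi A B : inb lo hi A -> inb lo hi B -> inb lo hi (rmul A B).
Proof.
move=> hA hB e /allpairsP [[a b] [ha hb ->]] /= i; rewrite mem_cat => /orP [].
  by apply: hA.
by apply: hB.
Qed.

Lemma inb_mono lo hi lo' hi' A : lo' <= lo -> hi <= hi' -> inb lo hi A -> inb lo' hi' A.
Proof.
move=> h1 h2 hA e he i hi1; move: (hA e he i hi1) => /andP [a b].
by apply/andP; split; [apply: leq_trans a | apply: leq_trans h2].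
Qed.

Lemma mrep_inb k m : inb m (m + 3 ^ k) (mrep k m).
Proof.
elim: k m => [|k IH] m /=.
  by move=> e; rewrite inE => /eqP -> i; rewrite inE => /eqP ->; rewrite leqnn addn1 ltnSn.
have e3 : 3 ^ k.+1 = 3 * 3 ^ k by rewrite expnS.
have h0 : inb m (m + 3 ^ k.+1) (mrep k m).
  apply: inb_mono (IH m) => //; rewrite leq_add2l e3; lia.
have h1 : inb m (m + 3 ^ k.+1) (mrep k (m + 3 ^ k)).
  apply: inb_mono (IH _); rewrite ?leq_addr //; rewrite e3; lia.
have h2 : inb m (m + 3 ^ k.+1) (mrep k (m + 2 * 3 ^ k)).
  apply: inb_mono (IH _); rewrite ?leq_addr //; rewrite e3; lia.
apply: inb_scale; do 3! apply: inb_cat => //.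
by apply: inb_scale; apply: inb_rmul => //; apply: inb_rmul.
Qed.

Arguments coef {n}.
Section Amb.
Variable n : nat.

Definition bset (lo hi : nat) : {set 'I_n} := [set i : 'I_n | lo <= val i < hi].

Lemma coef_cat A B (U : {set 'I_n}) : coef (A ++ B) U = (coef A U + coef B U)%R.
Proof. by rewrite /coef big_cat. Qed.

Lemma coef_scale c A (U : {set 'I_n}) : coef (scale c A) U = (c * coef A U)%R.
Proof. rewrite /coef big_map mulr_sumr; apply: eq_bigr => e _ /=; by rewrite mulrA. Qed.

Lemma oddset_sub T (i : 'I_n) : i \in oddset n T -> val i \in T.
Proof.
rewrite inE; apply: contraLR => h; by rewrite (count_memPn h).
Qed.

Lemma coef_ex A (U : {set 'I_n}) :
  coef A U != 0%R -> exists2 e, e \in A & oddset n e.1 = U.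
Proof.
move=> hU; have : has (fun e => oddset n e.1 == U) A.
  apply/negPn/negP => /hasPn hn.
  case/negP: hU; rewrite /coef big1_seq // => e /andP [_ he].
  by move: (hn e he) => /negbTE ->; rewrite mulr0.
by case/hasP => e he /eqP; exists e.
Qed.

Lemma coef_blk lo hi A (U : {set 'I_n}) :
  inb lo hi A -> coef A U != 0%R -> U \subset bset lo hi.
Proof.
move=> hA /coef_ex [e he <-]; apply/subsetP => i /oddset_sub hi1.
by rewrite inE; apply: hA hi1.
Qed.

Lemma sub2_empty a b c d (V : {set 'I_n}) :
  V \subset bset a b -> V \subset bset c d -> (b <= c) || (d <= a) -> V = set0.
Proof.
move=> /subsetP h1 /subsetP h2 h; apply/setP => i; rewrite inE.
apply/negP => hi1; move: (h1 i hi1) (h2 i hi1); rewrite !inE; lia.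
Qed.

Lemma oddset_cat lo1 hi1 lo2 hi2 s t :
  (forall i, i \in s -> lo1 <= i < hi1) -> (forall i, i \in t -> lo2 <= i < hi2) ->
  hi1 <= lo2 -> oddset n (s ++ t) = oddset n s :|: oddset n t.
Proof.
move=> hs ht h; apply/setP => i; rewrite !inE count_cat.
case hi_s: (val i \in s).
  have : val i \notin t by apply/negP => /ht; move: (hs _ hi_s); lia.
  by move/count_memPn => ->; rewrite addn0 orbC; case: (odd _) => //=; rewrite (count_memPn _) //.
by rewrite (count_memPn (negbT hi_s)).
Qed.
Lemma oddset_blk lo hi (s : seq nat) :
  (forall i, i \in s -> lo <= i < hi) -> oddset n s \subset bset lo hi.
Proof. by move=> h; apply/subsetP => i /oddset_sub /h; rewrite inE. Qed.

Lemma union_eq l1 h1 l2 h2 (P Q V W : {set 'I_n}) :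
  P \subset bset l1 h1 -> V \subset bset l1 h1 ->
  Q \subset bset l2 h2 -> W \subset bset l2 h2 -> h1 <= l2 ->
  (P :|: Q == V :|: W) = (P == V) && (Q == W).
Proof.
move=> /subsetP hP /subsetP hV /subsetP hQ /subsetP hW h.
apply/eqP/andP => [E|[/eqP -> /eqP ->] //]; split; apply/eqP/setP => i;
  move/setP: E => /(_ i); rewrite !inE.
- case iP: (i \in P); case iV: (i \in V) => //=.
  + case iW: (i \in W) => //; move: (hP i iP) (hW i iW); rewrite !inE; lia.
  + case iQ: (i \in Q) => //; move: (hV i iV) (hQ i iQ); rewrite !inE; lia.
- case iQ: (i \in Q); case iW: (i \in W) => //=; rewrite ?orbT ?orbF.
  + case iV: (i \in V) => //; move: (hV i iV) (hQ i iQ); rewrite !inE; lia.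
  + case iP: (i \in P) => //; move: (hP i iP) (hW i iW); rewrite !inE; lia.
Qed.

Lemma coef_rmul l1 h1 l2 h2 A B (V W : {set 'I_n}) :
  inb l1 h1 A -> inb l2 h2 B -> h1 <= l2 ->
  V \subset bset l1 h1 -> W \subset bset l2 h2 ->
  coef (rmul A B) (V :|: W) = (coef A V * coef B W)%R.
Proof.
move=> hA hB h hV hW.
rewrite /coef /rmul big_allpairs_dep /= mulr_suml; apply: eq_big_seq => a ha.
rewrite mulr_sumr; apply: eq_big_seq => b hb /=.
rewrite (oddset_cat _ _ _ _ _ _ (hA a ha) (hB b hb) h).
rewrite (union_eq _ _ _ _ _ _ _ _ (oddset_blk _ _ _ (hA a ha)) hV (oddset_blk _ _ _ (hB b hb)) hW h).
by rewrite -mulnb natrM mulrACA.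
Qed.
Lemma bset_mono lo hi lo' hi' : lo' <= lo -> hi <= hi' -> bset lo hi \subset bset lo' hi'.
Proof. move=> h1 h2; apply/subsetP => i; rewrite !inE; lia. Qed.

Lemma coef3 k m (V0 V1 V2 : {set 'I_n}) :
  V0 \subset bset m (m + 3 ^ k) ->
  V1 \subset bset (m + 3 ^ k) (m + 3 ^ k + 3 ^ k) ->
  V2 \subset bset (m + 2 * 3 ^ k) (m + 2 * 3 ^ k + 3 ^ k) ->
  coef (rmul (rmul (mrep k m) (mrep k (m + 3 ^ k))) (mrep k (m + 2 * 3 ^ k)))
       (V0 :|: V1 :|: V2) =
  (coef (mrep k m) V0 * coef (mrep k (m + 3 ^ k)) V1 * coef (mrep k (m + 2 * 3 ^ k)) V2)%R.
Proof.
move=> h0 h1 h2.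
have i01 : inb m (m + 2 * 3 ^ k) (rmul (mrep k m) (mrep k (m + 3 ^ k))).
  apply: inb_rmul; apply: inb_mono (mrep_inb _ _) => //; try lia.
rewrite (coef_rmul _ _ _ _ _ _ _ _ i01 (mrep_inb _ _) (leqnn _)); last first.
- exact: h2.
- rewrite subUset; apply/andP; split.
    by apply: subset_trans h0 _; apply: bset_mono; lia.
  by apply: subset_trans h1 _; apply: bset_mono; lia.
by rewrite (coef_rmul _ _ _ _ _ _ _ _ (mrep_inb _ _) (mrep_inb _ _) (leqnn _)).
Qed.
Fixpoint hh k := if k is k'.+1 then hh k' ^ 3 + hh k' else 1.

Lemma supp_nz R (V : {set 'I_n}) : coef R (set0 : {set 'I_n}) = 0%R -> V \in supp n R -> V != set0.
Proof. by move=> h; rewrite inE; apply: contraNneq => ->; rewrite h. Qed.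

Lemma mrep_supp k m : m + 3 ^ k <= n ->
  coef (mrep k m) (set0 : {set 'I_n}) = 0%R /\ hh k <= #|supp n (mrep k m)|.
Proof.
elim: k m => [|k IH] m hm.
  have hm' : m < n by rewrite expn0 addn1 in hm.
  have ho : Ordinal hm' \in oddset n [:: m] by rewrite inE /= eqxx.
  have hc U : coef (mrep 0 m) U = (oddset n [:: m] == U)%:R%R.
    by rewrite /coef /= big_cons big_nil mul1r addr0.
  split.
    rewrite hc; case: eqP => // E; by rewrite E inE in ho.
  apply/card_gt0P; exists (oddset n [:: m]); by rewrite inE hc eqxx oner_neq0.
set N := 3 ^ k.
have e3 : 3 ^ k.+1 = N + N + N by rewrite expnS /N; lia.
rewrite e3 in hm.
have [z0 c0] := IH m ltac:(lia).
have [z1 c1] := IH (m + N) ltac:(lia).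
have [z2 c2] := IH (m + 2 * N) ltac:(lia).
set R0 := mrep k m in z0 c0 *; set R1 := mrep k (m + N) in z1 c1 *;
set R2 := mrep k (m + 2 * N) in z2 c2 *.
have hc (U : {set 'I_n}) : coef (mrep k.+1 m) U = (1/2 * (coef R0 U + (coef R1 U + (coef R2 U +
      -1 * coef (rmul (rmul R0 R1) R2) U))))%R.
  by rewrite /= coef_scale !coef_cat coef_scale.
have b0 (U : {set 'I_n}) : coef R0 U != 0%R -> U \subset bset m (m + N) := coef_blk _ _ _ _ (mrep_inb k m).
have b1 (U : {set 'I_n}) : coef R1 U != 0%R -> U \subset bset (m + N) (m + N + N) :=
  coef_blk _ _ _ _ (mrep_inb k (m + N)).
have b2 (U : {set 'I_n}) : coef R2 U != 0%R -> U \subset bset (m + 2 * N) (m + 2 * N + N) :=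
  coef_blk _ _ _ _ (mrep_inb k (m + 2 * N)).
have e0 : (set0 : {set 'I_n}) = set0 :|: set0 :|: set0 by rewrite !setU0.
split.
  rewrite hc z0 z1 z2 e0 coef3 ?sub0set // z0 !mul0r; ring.
set S0 := supp n R0; set S1 := supp n R1; set S2 := supp n R2.
set f := fun t : {set 'I_n} * {set 'I_n} * {set 'I_n} => t.1.1 :|: t.1.2 :|: t.2.
set P := [set f t | t in setX (setX S0 S1) S2].
have inS0 (U : {set 'I_n}) : U \in S0 -> U \in supp n (mrep k.+1 m).
  move=> hU; have hU' := hU; rewrite inE in hU'.
  have nU := supp_nz _ _ z0 hU.
  have s0 := b0 _ hU'.
  have E1 : coef R1 U = 0%R.
    apply/eqP; apply: contraR nU => /b1 s1; apply/eqP.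
    by apply: sub2_empty s0 s1 _; rewrite leqnn.
  have E2 : coef R2 U = 0%R.
    apply/eqP; apply: contraR nU => /b2 s2; apply/eqP.
    by apply: sub2_empty s0 s2 _; apply/orP; left; lia.
  have E3 : coef (rmul (rmul R0 R1) R2) U = 0%R.
    rewrite -[U]setU0 -[U :|: set0]setU0 coef3 ?sub0set // z1; by rewrite mulr0 mul0r.
  rewrite inE hc E1 E2 E3 !add0r mulr0 addr0 mulf_neq0 //.
have sP t : t \in setX (setX S0 S1) S2 ->
   [/\ t.1.1 \subset bset m (m + N), t.1.2 \subset bset (m + N) (m + N + N) &
       t.2 \subset bset (m + 2 * N) (m + 2 * N + N)] /\
      [/\ coef R0 t.1.1 != 0%R, coef R1 t.1.2 != 0%R & coef R2 t.2 != 0%R].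
  case: t => [[V0 V1] V2]; rewrite !inE /= => /andP [/andP [h0 h1] h2].
  by split; split => //; [apply: b0 | apply: b1 | apply: b2].
have inP (U : {set 'I_n}) : U \in P -> U \in supp n (mrep k.+1 m).
  case/imsetP => t ht ->; have [[s0 s1 s2] [n0 n1 n2]] := sP t ht.
  have nz1 : t.1.2 != set0 by apply: contraNneq n1 => ->; rewrite z1.
  have nz0 : t.1.1 != set0 by apply: contraNneq n0 => ->; rewrite z0.
  rewrite inE hc /f coef3 //.
  have u0 : t.1.1 \subset t.1.1 :|: t.1.2 :|: t.2.
    by apply/subsetP => i hi; rewrite !inE hi.
  have u1 : t.1.2 \subset t.1.1 :|: t.1.2 :|: t.2.
    by apply/subsetP => i hi; rewrite !inE hi !orbT.
  have -> : coef R0 (t.1.1 :|: t.1.2 :|: t.2) = 0%R.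
    apply/eqP; apply: contraR nz1 => /b0 s; apply/eqP.
    by apply: (sub2_empty _ _ _ _ _ (subset_trans u1 s) s1); rewrite leqnn.
  have -> : coef R1 (t.1.1 :|: t.1.2 :|: t.2) = 0%R.
    apply/eqP; apply: contraR nz0 => /b1 s; apply/eqP.
    by apply: (sub2_empty _ _ _ _ _ (subset_trans u0 s) s0); rewrite leqnn orbT.
  have -> : coef R2 (t.1.1 :|: t.1.2 :|: t.2) = 0%R.
    apply/eqP; apply: contraR nz0 => /b2 s; apply/eqP.
    by apply: (sub2_empty _ _ _ _ _ (subset_trans u0 s) s0); apply/orP; right; rewrite leq_add2l leq_pmull.
  rewrite !add0r mulf_neq0 // mulN1r oppr_eq0 !mulf_neq0 //.
have dis : S0 :&: P = set0.
  apply/setP => U; rewrite !inE; apply/negP => /andP [hU /imsetP [t ht E]].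
  have [[s0 s1 s2] [n0 n1 n2]] := sP t ht.
  have nz1 : t.1.2 != set0 by apply: contraNneq n1 => ->; rewrite z1.
  have s := b0 _ hU.
  have u1 : t.1.2 \subset U.
    by rewrite E; apply/subsetP => i hi; rewrite !inE hi !orbT.
  case/negP: nz1; apply/eqP.
  by apply: (sub2_empty _ _ _ _ _ (subset_trans u1 s) s1); rewrite leqnn.
have hle : m + N + N <= m + 2 * N by lia.
have inj : {in setX (setX S0 S1) S2 &, injective f}.
  move=> t t' ht ht' E.
  have [[s0 s1 s2] _] := sP t ht; have [[s0' s1' s2'] _] := sP t' ht'.
  have su01 : t.1.1 :|: t.1.2 \subset bset m (m + N + N).
    rewrite subUset; apply/andP; split.
      by apply: subset_trans s0 _; apply: bset_mono; rewrite ?leq_addr ?leqnn.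
    by apply: subset_trans s1 _; apply: bset_mono; rewrite ?leq_addr ?leqnn.
  have su01' : t'.1.1 :|: t'.1.2 \subset bset m (m + N + N).
    rewrite subUset; apply/andP; split.
      by apply: subset_trans s0' _; apply: bset_mono; rewrite ?leq_addr ?leqnn.
    by apply: subset_trans s1' _; apply: bset_mono; rewrite ?leq_addr ?leqnn.
  move/eqP: E; rewrite /f (union_eq _ _ _ _ _ _ _ _ su01 su01' s2 s2' hle).
  case/andP => E12 /eqP E2.
  move: E12; rewrite (union_eq _ _ _ _ _ _ _ _ s0 s0' s1 s1' (leqnn _)).
  case/andP => /eqP E0 /eqP E1.
  by move: E0 E1 E2; case: t {ht s0 s1 s2 su01} => [[a b] c]; case: t' {ht' s0' s1' s2' su01'} => [[a' b'] c'] /= -> -> ->.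
have cardP : #|P| = #|S0| * #|S1| * #|S2| by rewrite card_in_imset // !cardsX.
have sub : S0 :|: P \subset supp n (mrep k.+1 m).
  rewrite subUset; apply/andP; split; apply/subsetP => U; [exact: inS0 | exact: inP].
apply: leq_trans (subset_leq_card sub).
have := cardsUI S0 P; rewrite dis cards0 addn0 => ->.
rewrite cardP /= addnC; apply: leq_add => //.
rewrite !expnS expn0 muln1 mulnA.
by apply: leq_mul => //; apply: leq_mul.
Qed.
End Amb.

Lemma hh_lb k : 2 ^ (3 ^ k) <= hh k.+1.
Proof.
elim: k => [|k IH] //.
rewrite [hh _]/= expnSr expnM.
apply: leq_trans (leq_addr _ _).
by rewrite leq_exp2r.
Qed.

Lemma depth_lb k (t : pdt (3 ^ k)) :
  pdt_computes t (@MAJ3k k) -> hh k <= 4 ^ pdt_depth t.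
Proof.
move=> hc.
have E (x : {ffun 'I_(3 ^ k) -> bool}) : ev (trep t) (ext x) = ev (mrep k 0) (ext x).
  rewrite ev_trep ev_mrep hc /MAJ3k; congr sgn.
  by apply: majk_ext => i; rewrite addn0.
have cu := coef_uniq _ _ _ E.
have [_ h] := mrep_supp (3 ^ k) k 0 (leqnn _).
apply: leq_trans h _.
have -> : supp (3 ^ k) (mrep k 0) = supp (3 ^ k) (trep t).
  by apply/setP => U; rewrite !inE cu.
apply: leq_trans (supp_size _ _) _; exact: size_trep.
Qed.

Local Open Scope ring_scope.

Theorem theorem2 :
  exists c : rat, 0 < c /\
    forall (k : nat), (1 <= k)%N ->
      forall t : pdt (3 ^ k), pdt_computes t (@MAJ3k k) ->
        c * (9%:R / 4%:R) ^+ k <= (pdt_depth t)%:R.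
Proof.
exists (1/6)%R; split; first by rewrite mul1r invr_gt0 ltr0n.
move=> k hk t hc.
have h1 := depth_lb _ _ hc.
move: hk t hc h1; case: k => [|k]; first by [].
move=> _ t hc h1.
have h2 := leq_trans (hh_lb k) h1.
have h3 : (3 ^ k <= 2 * pdt_depth t)%N.
  by rewrite -(@leq_exp2l 2) // expnM.
have h4 : ((9%:R / 4%:R) ^+ k.+1 <= (3 ^ k.+1)%:R :> rat).
  rewrite natrX; apply: lerXn2r; rewrite ?inE //.
set d := pdt_depth t in h3 *.
have h5 : ((3 ^ k.+1)%:R <= (6 * d)%:R :> rat).
  by rewrite ler_nat expnS; lia.
rewrite natrM in h5.
have : (1 / 6 * (9%:R / 4%:R) ^+ k.+1 <= 1/6 * (6%:R * d%:R) :> rat).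
  by rewrite ler_pM2l //; apply: le_trans h4 h5.
by rewrite mulrA mul1r mulVf // mul1r.
Qed.
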